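(* Let $K$ be a finite field, $G$ a finite group and $C$ a right ideal of the group algebra $KG$. Then $C$ is checkable if and only if the orthogonal space $C^\perp$ (with respect to the standard bilinear form on $KG$) is a principal right ideal of $KG$.
   Context: $KG$ is the group algebra with $K$-basis $\{g: g\in G\}$. It carries the symmetric nondegenerate bilinear form $\langle\cdot,\cdot\rangle$ defined by $\langle g,h\rangle=\delta_{g,h}$ for $g,h\in G$, and $C^\perp=\{a\in KG:\langle a,c\rangle=0 \text{ for all } c\in C\}$. For $C\subseteq KG$, $\operatorname{ann}_r(C)=\{a\in KG: ca=0 \ \forall c\in C\}$. A right ideal $I\le KG$ is called checkable if there is $v\in KG$ with $I=\{a\in KG: va=0\}=\operatorname{ann}_r(KGv)$. *)

(* Defs.v *)
From HB Require Import structures.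
From mathcomp Require Import all_boot all_order all_algebra all_fingroup.
Set Implicit Arguments. Unset Strict Implicit. Unset Printing Implicit Defensive.
Import GRing.Theory.
Local Open Scope ring_scope.

(* The group algebra KG: K-valued functions on the (finite) group gT,
   an element a is identified with \sum_g a g * g. *)
Definition KG (K : finFieldType) (gT : finGroupType) := {ffun gT -> K}.

Definition gmul (K : finFieldType) (gT : finGroupType) (a b : {ffun gT -> K})
  : {ffun gT -> K} :=
  [ffun g : gT => \sum_(h : gT) a h * b ((h^-1) * g)%g].

(* standard bilinear form <g,h> = delta_{g,h} *)
Definition gform (K : finFieldType) (gT : finGroupType) (a b : {ffun gT -> K}) : K :=
  \sum_(g : gT) a g * b g.

Definition is_right_ideal (K : finFieldType) (gT : finGroupType)
  (C : {set {ffun gT -> K}}) : Prop :=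
  [/\ 0 \in C,
      (forall x y, x \in C -> y \in C -> x + y \in C) &
      (forall c a, c \in C -> gmul c a \in C)].

Definition perp (K : finFieldType) (gT : finGroupType) (C : {set {ffun gT -> K}})
  : {set {ffun gT -> K}} :=
  [set a | [forall c in C, gform a c == 0]].

Definition checkable (K : finFieldType) (gT : finGroupType)
  (I : {set {ffun gT -> K}}) : Prop :=
  exists v : {ffun gT -> K}, I = [set a | gmul v a == 0].

Definition principal_right_ideal (K : finFieldType) (gT : finGroupType)
  (D : {set {ffun gT -> K}}) : Prop :=
  exists u : {ffun gT -> K}, D = [set gmul u a | a : {ffun gT -> K}].

(* Main.v *)
Require Import Defs.
From HB Require Import structures.
From mathcomp Require Import all_boot all_order all_algebra all_fingroup.
Set Implicit Arguments. Unset Strict Implicit. Unset Printing Implicit Defensive.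
Import GRing.Theory.
Local Open Scope ring_scope.

Definition ginv (K : finFieldType) (gT : finGroupType) (u : {ffun gT -> K}) :
  {ffun gT -> K} := [ffun g => u (g^-1)%g].

Lemma ginvK (K : finFieldType) (gT : finGroupType) (u : {ffun gT -> K}) :
  ginv (ginv u) = u.
Proof. by apply/ffunP => g; rewrite !ffunE invgK. Qed.

Lemma gform_gmul (K : finFieldType) (gT : finGroupType) (a u x : {ffun gT -> K}) :
  gform a (gmul u x) = \sum_y x y * gmul (ginv u) a y.
Proof.
rewrite /gform /gmul.
transitivity (\sum_g \sum_y a g * (u (g * y^-1)%g * x y)).
  apply: eq_bigr => g _; rewrite ffunE mulr_sumr.
  rewrite (reindex (fun y => g * y^-1)%g); last first.
    by exists (fun h => h^-1 * g)%g => h _; rewrite invMg invgK ?mulgKV ?mulKVg.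
  apply: eq_bigr => y _; congr (_ * (_ * x _)).
  rewrite invMg invgK mulgKV. done.
rewrite exchange_big; apply: eq_bigr => y _.
rewrite ffunE mulr_sumr.
rewrite (reindex (fun h => h^-1 * y)%g); last first.
  by exists (fun h => y * h^-1)%g => h _; rewrite invMg invgK ?mulgKV ?mulKVg.
apply: eq_bigr => g _; rewrite ffunE.
by rewrite mulgK [RHS]mulrC -mulrA mulrCA.
Qed.

Definition delta (K : finFieldType) (gT : finGroupType) (y : gT) : {ffun gT -> K} :=
  [ffun z => (z == y)%:R].

Lemma sum_delta (K : finFieldType) (gT : finGroupType) (y : gT) (F : gT -> K) :
  \sum_z delta K y z * F z = F y.
Proof.
rewrite (bigD1 y) //= big1 ?addr0; first by rewrite ffunE eqxx mul1r.
by move=> z /negbTE nz; rewrite ffunE nz mul0r.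
Qed.

Lemma perp_image (K : finFieldType) (gT : finGroupType) (u : {ffun gT -> K}) :
  perp [set gmul u x | x : {ffun gT -> K}] = [set a | gmul (ginv u) a == 0].
Proof.
apply/setP => a; rewrite !inE; apply/forall_inP/eqP.
  move=> H; apply/ffunP => y.
  have hin : gmul u (delta K y) \in [set gmul u x | x : {ffun gT -> K}].
    by apply/imsetP; exists (delta K y).
  by rewrite [RHS]ffunE -(eqP (H _ hin)) gform_gmul sum_delta.
move=> E c /imsetP [x _ ->]; rewrite gform_gmul E.
by apply/eqP/big1 => y _; rewrite ffunE mulr0.
Qed.

Definition subsp (K : finFieldType) (gT : finGroupType) (W : {set {ffun gT -> K}}) :=
  [/\ 0 \in W, (forall x y, x \in W -> y \in W -> x + y \in W) &
      (forall k x, x \in W -> [ffun g => k * x g] \in W)].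

Lemma ideal_subsp (K : finFieldType) (gT : finGroupType) (C : {set {ffun gT -> K}}) :
  is_right_ideal C -> subsp C.
Proof.
case=> H0 HD HM; split=> // k x Hx.
have -> : [ffun g => k * x g] = gmul x [ffun z => (z == 1%g)%:R * k].
  apply/ffunP => g; rewrite !ffunE (bigD1 g) //= big1 ?addr0.
    by rewrite ffunE mulVg eqxx mul1r mulrC.
  by move=> h /negbTE nh; rewrite ffunE -eq_mulVg1 nh mul0r mulr0.
by apply: HM.
Qed.

Lemma image_subsp (K : finFieldType) (gT : finGroupType) (u : {ffun gT -> K}) :
  subsp [set gmul u x | x : {ffun gT -> K}].
Proof.
split.
- apply/imsetP; exists 0 => //; apply/ffunP => g; rewrite !ffunE.
  by rewrite big1 // => h _; rewrite ffunE mulr0.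
- move=> _ _ /imsetP [a _ ->] /imsetP [b _ ->]; apply/imsetP; exists (a + b) => //.
  apply/ffunP => g; rewrite !ffunE -big_split /=; apply: eq_bigr => h _.
  by rewrite ffunE mulrDr.
- move=> k _ /imsetP [a _ ->]; apply/imsetP; exists [ffun g => k * a g] => //.
  apply/ffunP => g; rewrite !ffunE mulr_sumr; apply: eq_bigr => h _.
  by rewrite ffunE mulrCA.
Qed.

Definition phi (K : finFieldType) (gT : finGroupType) (a : {ffun gT -> K}) :
  'rV[K]_#|gT| := \row_k a (enum_val k).
Definition psi (K : finFieldType) (gT : finGroupType) (r : 'rV[K]_#|gT|) :
  {ffun gT -> K} := [ffun g => r 0 (enum_rank g)].

Lemma psiK (K : finFieldType) (gT : finGroupType) (a : {ffun gT -> K}) :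
  psi (phi a) = a.
Proof. by apply/ffunP => g; rewrite ffunE mxE enum_rankK. Qed.

Lemma phiK (K : finFieldType) (gT : finGroupType) (r : 'rV[K]_#|gT|) :
  phi (psi r) = r.
Proof. by apply/rowP => k; rewrite mxE ffunE enum_valK. Qed.

Lemma gform_phi (K : finFieldType) (gT : finGroupType) (a b : {ffun gT -> K}) :
  gform a b = \sum_k phi a 0 k * phi b 0 k.
Proof.
rewrite /gform (reindex (@enum_val gT gT)) /=; last exact: onW_bij (enum_val_bij gT).
by apply: eq_bigr => k _; rewrite !mxE.
Qed.

Lemma gformC (K : finFieldType) (gT : finGroupType) (a b : {ffun gT -> K}) :
  gform a b = gform b a.
Proof. by apply: eq_bigr => g _; rewrite mulrC. Qed.

Lemma sum_in (K : finFieldType) (gT : finGroupType) (W : {set {ffun gT -> K}})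
  (I : finType) (F : I -> 'rV[K]_#|gT|) :
  subsp W -> (forall i, psi (F i) \in W) -> psi (\sum_i F i) \in W.
Proof.
case=> H0 HD _ HF.
apply: (big_ind (fun r => psi r \in W)) => //.
- have -> : psi (0 : 'rV[K]_#|gT|) = 0 by apply/ffunP => g; rewrite !ffunE mxE.
  exact: H0.
- move=> r1 r2 h1 h2.
  have -> : psi (r1 + r2) = psi r1 + psi r2 by apply/ffunP => g; rewrite !ffunE mxE.
  exact: HD.
Qed.

Lemma perp_perp (K : finFieldType) (gT : finGroupType) (W : {set {ffun gT -> K}}) :
  subsp W -> perp (perp W) = W.
Proof.
move=> HW; have [H0 HD HZ] := HW.
apply/setP => b; apply/idP/idP; last first.
  move=> Hb; rewrite inE; apply/forall_inP => c; rewrite inE => /forall_inP H.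
  by rewrite gformC; exact: H.
pose M : 'M[K]_(#|{ffun gT -> K}|, #|gT|) :=
  \matrix_i phi (if enum_val i \in W then enum_val i else 0).
have rowM i : row i M = phi (if enum_val i \in W then enum_val i else 0).
  by apply/rowP => k; rewrite !mxE.
have F1 a : a \in W -> (phi a <= M)%MS.
  by move=> Ha; have := row_sub (enum_rank a) M; rewrite rowM enum_rankK Ha.
have F2 a : (phi a <= M)%MS -> a \in W.
  case/submxP => D hD; rewrite -(psiK a) hD mulmx_sum_row.
  apply: sum_in => // i.
  have -> : psi (D 0 i *: row i M) = [ffun g => D 0 i * psi (row i M) g].
    by apply/ffunP => g; rewrite !ffunE mxE.
  apply: HZ; rewrite rowM psiK; by case: ifP.
pose P := kermx M^T.
have PM : P *m M^T = 0 by exact: mulmx_ker.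
have hrowP j : psi (row j P) \in perp W.
  rewrite inE; apply/forall_inP => c hc.
  have /rowP /(_ (enum_rank c)) := congr1 (row j) PM.
  rewrite row_mul row0 !mxE gform_phi phiK => E; apply/eqP; rewrite -[X in _ = X]E.
  apply: eq_bigr => k _; rewrite !mxE enum_rankK hc; done.
pose Q := kermx P^T.
have hbQ : (phi b <= Q)%MS -> b \in W.
  move=> hb; apply: F2; apply: (submx_trans hb).
  have hMQ : (M <= Q)%MS.
    rewrite sub_kermx; have := congr1 trmx PM; rewrite trmx_mul trmxK trmx0.
    by move=> ->.
  have hrk : \rank M = \rank Q.
    rewrite /Q mxrank_ker mxrank_tr /P mxrank_ker mxrank_tr subKn //.
    exact: rank_leq_col.
  have /andP [] : (M == Q)%MS by rewrite -(mxrank_leqif_eq hMQ).2 hrk.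
  done.
move=> Hb; apply: hbQ; rewrite sub_kermx; apply/eqP/rowP => j.
move: Hb; rewrite inE => /forall_inP /(_ _ (hrowP j)) /eqP.
rewrite gform_phi phiK !mxE => E; rewrite -[X in _ = X]E.
by apply: eq_bigr => k _; rewrite !mxE.
Qed.

Theorem mainTheorem3 (K : finFieldType) (gT : finGroupType)
  (C : {set {ffun gT -> K}}) :
  is_right_ideal C -> (checkable C <-> principal_right_ideal (perp C)).
Proof.
move=> HC; split.
  move=> [v Cv]; exists (ginv v).
  have E : C = perp [set gmul (ginv v) x | x : {ffun gT -> K}].
    by rewrite perp_image ginvK.
  rewrite E perp_perp //; exact: image_subsp.
move=> [u Pu]; exists (ginv u).
rewrite -perp_image -Pu perp_perp //; exact: ideal_subsp.
Qed.
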